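(* In the single-item all-pay auction with budgets described in the context, in a Nash equilibrium $(F_1,F_2)$, if $\underline{x}_1<\overline{x}_1$ and $\underline{x}_2<\overline{x}_2$, then $\underline{x}_1=\underline{x}_2=0$.
   Context: Single-item all-pay auction with budgets. There are two players $i\in\{1,2\}$; $-i$ denotes the opponent of $i$. Player $i$ has budget $B_i\ge 0$ and valuation $v_i>0$ for a single item. A pure strategy of player $i$ is a bid $x_i\in[0,B_i]$; a mixed strategy is a probability distribution on $[0,B_i]$, described by its cumulative distribution function $F_i$. The player with the higher bid wins the item. Tie-breaking: if $x_1=x_2=\min\{B_1,B_2,v_1,v_2\}$ and $\min\{B_i,v_i\}>\min\{B_{-i},v_{-i}\}$ for some $i$, then player $i$ wins; in all other ties each player wins with probability $\frac12$. Player $i$'s utility is $v_i-x_i$ if he wins and $-x_i$ if he loses. A Nash equilibrium is a pair $(F_1,F_2)$ such that each $F_i$ maximizes player $i$'s expected utility against $F_{-i}$ over all mixed strategies on $[0,B_i]$. $Supp(F_i)$ is the support of $F_i$, $\overline{x}_i=\sup Supp(F_i)$ and $\underline{x}_i=\inf Supp(F_i)$. *)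

(* Defs.v *)
From HB Require Import structures.
From mathcomp Require Import all_boot all_order all_algebra.
From mathcomp Require Import all_classical all_reals all_analysis.
Set Implicit Arguments. Unset Strict Implicit. Unset Printing Implicit Defensive.
Import Order.TTheory GRing.Theory Num.Theory.
Import numFieldNormedType.Exports.
Local Open Scope classical_set_scope.
Local Open Scope ring_scope.

Section AllPay.
Variable R : realType.

(* Probability that the player with own budget/valuation (B, v) wins the item
   when bidding x against an opponent with budget/valuation (B', v') who bids y,
   according to the tie-breaking rule of the paper. *)
Definition win_prob (B v B' v' x y : R) : R :=
  if y < x then 1
  else if x < y then 0
  else
    let m := Num.min (Num.min B B') (Num.min v v') in
    if (x == m) && (Num.min B' v' < Num.min B v) then 1
    else if (x == m) && (Num.min B v < Num.min B' v') then 0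
    else 2^-1.

Definition payoff (B v B' v' x y : R) : R := v * win_prob B v B' v' x y - x.

Definition strategy_on (B : R) (mu : probability R R) : Prop :=
  mu `[0, B]%classic = 1%E.

Definition exp_util (B v B' v' : R) (mu nu : probability R R) : \bar R :=
  (\int[mu]_x \int[nu]_y (payoff B v B' v' x y)%:E)%E.

Definition nash_eq (B1 v1 B2 v2 : R) (mu1 mu2 : probability R R) : Prop :=
  [/\ strategy_on B1 mu1, strategy_on B2 mu2,
      (forall mu, strategy_on B1 mu ->
          (exp_util B1 v1 B2 v2 mu mu2 <= exp_util B1 v1 B2 v2 mu1 mu2)%E)
    & (forall mu, strategy_on B2 mu ->
          (exp_util B2 v2 B1 v1 mu mu1 <= exp_util B2 v2 B1 v1 mu2 mu1)%E)].

Definition supp (mu : probability R R) : set R :=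
  [set x : R | forall e : R, 0 < e ->
     (0%E < mu (`](x - e)%R, (x + e)%R[%classic))%E].

Definition supp_inf (mu : probability R R) : R := inf (supp mu).
Definition supp_sup (mu : probability R R) : R := sup (supp mu).

End AllPay.

(* Main.v *)
Require Import Defs.
From HB Require Import structures.
From mathcomp Require Import all_boot all_order all_algebra.
From mathcomp Require Import all_classical all_reals all_analysis.
From mathcomp Require Import ring lra measurable_realfun.
Import Order.TTheory GRing.Theory Num.Theory.
Import numFieldNormedType.Exports.
Local Open Scope classical_set_scope.
Local Open Scope ring_scope.

Section S.
Variable R : realType.
Implicit Types (nu mu : probability R R).

Lemma pfin nu (A : set R) : measurable A -> nu A = (fine (nu A))%:E.
Proof.
move=> mA; rewrite fineK // ge0_fin_numE ?measure_ge0 //.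
by rewrite (le_lt_trans (probability_le1 nu mA)) // ltry.
Qed.

Lemma int_lin nu (A S : set R) (a b c : R) : measurable A -> measurable S ->
  (\int[nu]_y ((a * \1_A y + b * \1_S y - c)%:E) =
   (a * fine (nu A) + b * fine (nu S) - c)%:E)%E.
Proof.
move=> mA mS.
have iA : nu.-integrable setT (EFin \o (fun y => a * \1_A y)).
  by apply: (eq_integrable measurableT _ _ _ (integrableZl measurableT a (integrable_indic nu mA))) => y _ /=; rewrite EFinM.
have iS : nu.-integrable setT (EFin \o (fun y => b * \1_S y)).
  by apply: (eq_integrable measurableT _ _ _ (integrableZl measurableT b (integrable_indic nu mS))) => y _ /=; rewrite EFinM.
have ic : nu.-integrable setT (EFin \o (fun y : R => c)).
  exact: finite_measure_integrable_cst.
rewrite (_ : (fun y => _) = (fun y => ((a * \1_A y + b * \1_S y)%R)%:E - (c%:E))%E); last first.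
  by apply/funext => y; rewrite EFinB.
rewrite integralB_EFin //; last first.
  by apply: (eq_integrable measurableT _ _ _ (integrableD measurableT iA iS)) => y _ /=; rewrite EFinD.
rewrite (_ : (fun y => _) = ((EFin \o (fun y => (a * \1_A y)%R)) \+ (EFin \o (fun y => (b * \1_S y)%R)))%E); last first.
  by apply/funext => y; rewrite /= EFinD.
rewrite integralD_EFin //.
rewrite /= (_ : (fun y => _) = (fun y => a%:E * (\1_A y)%:E)%E); last by apply/funext.
rewrite (_ : (fun y => ((b * _)%R)%:E) = (fun y => b%:E * (\1_S y)%:E)%E); last by apply/funext.
rewrite !integralZl //; try exact: integrable_indic.
rewrite !integral_indic // !setIT.
rewrite (_ : (\int[nu]__ c%:E)%E = (c%:E * nu setT)%E); last by rewrite -(integral_cst nu measurableT c%:E).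
rewrite probability_setT mule1.
by rewrite EFinB EFinD !EFinM -(pfin nu A mA) -(pfin nu S mS).
Qed.

Lemma pge0 nu (A : set R) : 0 <= fine (nu A).
Proof. by apply: fine_ge0; exact: measure_ge0. Qed.

Lemma ple1 nu (A : set R) : measurable A -> fine (nu A) <= 1.
Proof. by move=> mA; rewrite -lee_fin -pfin // probability_le1. Qed.

Lemma ple nu (A B : set R) : measurable A -> measurable B -> A `<=` B ->
  fine (nu A) <= fine (nu B).
Proof.
move=> mA mB AB; rewrite -lee_fin -!pfin //; apply: le_measure => //; rewrite inE //.
Qed.

Lemma psub nu (A B C : set R) : measurable A -> measurable B -> measurable C ->
  A `<=` B `|` C -> fine (nu A) <= fine (nu B) + fine (nu C).
Proof.
move=> mA mB mC ABC; rewrite -lee_fin EFinD -!pfin //.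
apply: le_trans (measureU2 _ mB mC).
apply: le_measure => //; rewrite inE //; exact: measurableU.
Qed.

Lemma padd nu (A B : set R) : measurable A -> measurable B -> A `&` B = set0 ->
  fine (nu (A `|` B)) = fine (nu A) + fine (nu B).
Proof.
move=> mA mB AB; apply: EFin_inj; rewrite EFinD -!pfin //; last exact: measurableU.
by rewrite measureU.
Qed.

Definition mval (B v B' v' : R) := Num.min (Num.min B B') (Num.min v v').
Definition tv (B v B' v' x : R) : R :=
  if (x == mval B v B' v') && (Num.min B' v' < Num.min B v) then 1
  else if (x == mval B v B' v') && (Num.min B v < Num.min B' v') then 0
  else 2^-1.

Definition Gf nu x := fine (nu `]-oo, x[%classic).
Definition Hf nu x := fine (nu `]-oo, x]%classic).
Definition Sf nu x := fine (nu [set x]).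
Definition Uf B v B' v' nu x := v * (Gf nu x + tv B v B' v' x * Sf nu x) - x.

Lemma wp_eq B v B' v' x y : win_prob B v B' v' x y =
  \1_(`]-oo, x[%classic) y + tv B v B' v' x * \1_[set x] y.
Proof.
rewrite /win_prob !indicE.
have [yx|xy|xy] := ltgtP y x.
- rewrite mem_set; last by rewrite /= in_itv /= yx.
  rewrite memNset ?mulr0 ?addr0 //= => e; by rewrite e ltxx in yx.
- rewrite memNset; last by rewrite /= in_itv /= ltNge ltW.
  rewrite memNset ?mulr0 ?addr0 //= => e; by rewrite e ltxx in xy.
- rewrite -xy memNset; last by rewrite /= in_itv /= ltxx.
  by rewrite mem_set //= mulr1 add0r.
Qed.

Lemma inner B v B' v' nu x :
  (\int[nu]_y (payoff B v B' v' x y)%:E = (Uf B v B' v' nu x)%:E)%E.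
Proof.
rewrite (_ : (fun y => (payoff B v B' v' x y)%:E) = (fun y => ((v * \1_(`]-oo, x[%classic) y +
   (v * tv B v B' v' x) * \1_[set x] y - x)%R)%:E)); last first.
  by apply/funext => y; rewrite /payoff wp_eq mulrDr mulrA.
rewrite int_lin //.
by rewrite /Uf /Gf /Sf mulrDr mulrA.
Qed.

Lemma HGS nu x : Hf nu x = Gf nu x + Sf nu x.
Proof.
rewrite /Hf /Gf /Sf -padd //.
- congr (fine (nu _)); apply/seteqP; split => y /=.
  + rewrite !in_itv /= le_eqVlt => /orP[/eqP ->|->]; by [right|left].
  + by rewrite !in_itv /= => -[/ltW|->].
- apply/seteqP; split => y //= [] ; rewrite in_itv /= => + yx; by rewrite yx ltxx.
Qed.

Lemma Gf_nd nu : {homo Gf nu : x y / x <= y}.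
Proof.
move=> x y xy; apply: ple; try exact: measurable_itv.
by move=> z /=; rewrite !in_itv /= => /lt_le_trans; apply.
Qed.

Lemma Hf_nd nu : {homo Hf nu : x y / x <= y}.
Proof.
move=> x y xy; apply: ple; try exact: measurable_itv.
by move=> z /=; rewrite !in_itv /= => /le_trans; apply.
Qed.

Lemma Uf_meas B v B' v' nu : measurable_fun setT (Uf B v B' v' nu).
Proof.
have -> : Uf B v B' v' nu = fun x => v * (Gf nu x + (if x == mval B v B' v' then
   tv B v B' v' (mval B v B' v') else 2^-1) * (Hf nu x - Gf nu x)) - x.
  apply/funext => x; rewrite /Uf HGS addrAC subrr add0r.
  case: eqP => [->//|/eqP xm].
  by rewrite /tv (negbTE xm).
apply: measurable_funB => //; apply: measurable_funM => //.
apply: measurable_funD; first exact: nondecreasing_measurable (@Gf_nd nu).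
apply: measurable_funM; last first.
  apply: measurable_funB; first exact: nondecreasing_measurable (@Hf_nd nu).
  exact: nondecreasing_measurable (@Gf_nd nu).
apply: measurable_fun_ifT => //.
exact: measurable_fun_eqr.
Qed.

Lemma exp_utilE B v B' v' mu nu :
  exp_util B v B' v' mu nu = (\int[mu]_x (Uf B v B' v' nu x)%:E)%E.
Proof. by apply: eq_integral => x _; rewrite inner. Qed.

Lemma tv_ge0 B v B' v' x : 0 <= tv B v B' v' x.
Proof. by rewrite /tv; do 2 case: ifP => _ //; rewrite invr_ge0 ler0n. Qed.

Lemma tv_le1 B v B' v' x : tv B v B' v' x <= 1.
Proof. rewrite /tv; do 2 case: ifP => _ //; rewrite invf_le1 ?ler1n //. Qed.

Lemma W_bnd B v B' v' nu x :
  0 <= Gf nu x + tv B v B' v' x * Sf nu x <= 1.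
Proof.
have G0 : 0 <= Gf nu x by apply: pge0.
have S0 : 0 <= Sf nu x by apply: pge0.
have H1 : Hf nu x <= 1 by apply: ple1; exact: measurable_itv.
have t0 := tv_ge0 B v B' v' x; have t1 := tv_le1 B v B' v' x.
rewrite HGS in H1.
apply/andP; split; first by rewrite addr_ge0 // mulr_ge0.
apply: le_trans H1; rewrite lerD2l; rewrite -[leRHS]mul1r.
by apply: ler_wpM2r.
Qed.

Lemma dirac_strat B c : 0 <= c <= B -> strategy_on B (\d_c : probability R R).
Proof.
move=> cB; rewrite /strategy_on /= diracE mem_set //=.
Qed.

Lemma devD B v B' v' mu nu : 0 < v ->
  strategy_on B mu ->
  (forall mu', strategy_on B mu' ->
     (exp_util B v B' v' mu' nu <= exp_util B v B' v' mu nu)%E) ->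
  forall b, 0 <= b <= B -> forall (A : set R), measurable A -> (0 < mu A)%E ->
  forall eps, 0 < eps ->
  (forall x, A x -> Uf B v B' v' nu x <= Uf B v B' v' nu b - eps) -> False.
Proof.
move=> v0 smu Hn b bB A mA muA eps eps0 HA.
set U := Uf B v B' v' nu.
have mU : measurable_fun setT U by apply: Uf_meas.
have dev c : 0 <= c <= B -> ((U c)%:E <= exp_util B v B' v' mu nu)%E.
  move=> cB; have := Hn _ (dirac_strat _ _ cB).
  rewrite exp_utilE integral_dirac //; last exact/measurable_EFinP.
  by rewrite diracT mul1e.
set D := `[0, B]%classic.
have mD : measurable D by exact: measurable_itv.
have muDc : mu (~` D) = 0%E.
  by rewrite probability_setC // smu subee.
have E1 : exp_util B v B' v' mu nu = (\int[mu]_(x in D) (U x)%:E)%E.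
  rewrite exp_utilE [RHS]integral_mkcond.
  apply: ae_eq_integral => //.
  - exact/measurable_EFinP.
  - apply/(measurable_restrictT (fun x => (U x)%:E) mD).
    exact/measurable_EFinP/(measurable_funS measurableT).
  - exists (~` D); split => //; first exact: measurableC.
    move=> x /= /not_implyP [_ ]; rewrite patchE; case: ifPn => // xD _; by move: xD; rewrite notin_setE.
have iU : mu.-integrable D (EFin \o U).
  apply: measurable_bounded_integrable => //.
  - by rewrite (le_lt_trans (probability_le1 _ mD)) // ltry.
  - exact: (measurable_funS measurableT).
  - exists (v + B); split; first by rewrite num_real.
    move=> M HM x; rewrite /D /= in_itv /= => /andP[x0 xB].
    have := W_bnd B v B' v' nu x => /andP[W0 W1].
    rewrite /U /Uf.
    apply: le_trans (ltW HM).
    set W := (Gf nu x + _ * _) in W0 W1 *.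
    have h1 : 0 <= v * W by rewrite mulr_ge0 // ltW.
    have h2 : v * W <= v by rewrite -[leRHS]mulr1 ler_wpM2l // ltW.
    rewrite ler_norml; apply/andP; split; lra.
have Efin : exp_util B v B' v' mu nu \is a fin_num.
  by rewrite E1; exact: integrable_fin_num.
set e := fine (exp_util B v B' v' mu nu).
have Ee : exp_util B v B' v' mu nu = e%:E by rewrite fineK.
have iA : mu.-integrable D (EFin \o (fun x => eps * \1_A x)).
  apply: (integrableS measurableT) => //.
  by apply: (eq_integrable measurableT _ _ _ (integrableZl measurableT eps (integrable_indic mu mA))) => y _ /=; rewrite EFinM.
have key : (\int[mu]_(x in D) ((U x)%:E + (eps * \1_A x)%:E) <= \int[mu]_(x in D) e%:E)%E.
  apply: le_integral => //.
  - exact: integrableD.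
  - exact: finite_measure_integrable_cst.
  - move=> x; rewrite inE => Dx; rewrite -EFinD lee_fin indicE.
    have := dev x; rewrite Ee lee_fin => /(_ Dx) Ux.
    case: (boolP (x \in A)) => xA.
    + have := HA x (set_mem xA); have := dev b; rewrite Ee lee_fin => /(_ bB).
      rewrite mulr1 /U; lra.
    + by rewrite /= mulr0 addr0.
rewrite integralD // -E1 Ee integral_cst // in key.
move: key; set m := (X in (_ <= _ * X)%E); have -> : m = 1%E by exact: smu.
rewrite mule1.
rewrite (_ : (fun x => (eps * \1_A x)%:E) = (fun x => eps%:E * (\1_A x)%:E))%E; last first.
  by apply/funext => x; rewrite EFinM.
rewrite integralZl //; last by apply: (integrableS measurableT) => //; exact: integrable_indic.
rewrite integral_indic // => key.
have hAD : (mu A <= mu (A `&` D))%E.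
  have : (mu A <= mu (A `&` D) + mu (~` D))%E.
    apply: le_trans (measureU2 _ (measurableI _ _ mA mD) (measurableC mD)).
    apply: le_measure; rewrite ?inE //.
    - by apply: measurableU; [exact: measurableI|exact: measurableC].
    - by move=> x Ax; case: (pselect (D x)) => Dx; [left|right].
  by rewrite muDc adde0.
have fAD := pfin mu (A `&` D) (measurableI _ _ mA mD).
move: key; set m2 := (X in (_ + _ * X <= _)%E).
have -> : m2 = (fine (mu (A `&` D)))%:E by exact: fAD.
rewrite fAD (pfin mu A mA) in hAD.
rewrite (pfin mu A mA) in muA.
rewrite -EFinM -EFinD !lee_fin.
rewrite lee_fin in hAD; rewrite lte_fin in muA.
have : 0 < eps * fine (mu (A `&` D)).
  by apply: mulr_gt0 => //; lra.
lra.
Qed.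



Lemma null_out B mu (A : set R) : strategy_on B mu -> measurable A ->
  (forall x, A x -> ~ (0 <= x <= B)) -> mu A = 0%E.
Proof.
move=> smu mA HA; apply/eqP; rewrite eq_le measure_ge0 andbT.
have mD : measurable `[0, B]%classic by exact: measurable_itv.
have h : mu (~` `[0, B]%classic) = 0%E by rewrite probability_setC // smu subee.
rewrite -h; apply: le_measure; [by rewrite inE|by rewrite inE; exact: measurableC|].
by move=> x Ax /=; rewrite in_itv /=; apply: HA.
Qed.
Arguments null_out {B mu A}.


Lemma supp_sub B mu : strategy_on B mu -> forall x, supp mu x -> 0 <= x <= B.
Proof.
move=> smu x Hx; apply/negPn/negP => hx.
have [e [e0 He]] : exists e, 0 < e /\ forall y, x - e < y < x + e -> ~ (0 <= y <= B).
  move: hx; rewrite negb_and -!ltNge => /orP[x0|xB].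
  - exists (- x); split; first by lra.
    by move=> y /andP[_ h] /andP[h' _]; lra.
  - exists (x - B); split; first by lra.
    by move=> y /andP[h _] /andP[_ h']; lra.
have := Hx e e0; rewrite (null_out smu); [by rewrite ltxx|exact: measurable_itv|].
move=> y hy; apply: He; have : y \in `](x - e), (x + e)[ := hy; by rewrite in_itv.
Qed.
Arguments supp_sub {B mu}.


Lemma supp_ne mu : supp_inf mu < supp_sup mu -> supp mu !=set0.
Proof.
rewrite /supp_inf /supp_sup; have [->|//] := eqVneq (supp mu) set0.
  by rewrite inf0 sup0 ltxx.
by move/set0P.
Qed.
Arguments supp_ne {mu}.


Lemma supp_inf_bnd B mu : strategy_on B mu -> supp_inf mu < supp_sup mu ->
  0 <= supp_inf mu /\ supp_inf mu < B.
Proof.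
move=> smu hlt; have ne := supp_ne hlt.
have ss := supp_sub smu.
split.
  apply: lb_le_inf => // x /ss /andP[] //.
apply: (lt_le_trans hlt); apply: ge_sup => // x /ss /andP[] //.
Qed.
Arguments supp_inf_bnd {B mu}.


Lemma supp_inf_lb B mu x : strategy_on B mu -> supp mu x -> supp_inf mu <= x.
Proof.
move=> smu sx; apply: ge_inf => //; exists 0 => y /(supp_sub smu) /andP[] //.
Qed.
Arguments supp_inf_lb {B mu x}.


Lemma supp_inf_pos B mu : strategy_on B mu -> supp_inf mu < supp_sup mu ->
  forall e, 0 < e -> 0 < fine (mu `](supp_inf mu - e), (supp_inf mu + e)[%classic).
Proof.
move=> smu hlt e e0; set a := supp_inf mu.
have ne := supp_ne hlt.
have hi : has_inf (supp mu).
  by split => //; exists 0 => y /(supp_sub smu) /andP[].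
have [x sx xa] := @inf_adherent _ _ (e / 2) (divr_gt0 e0 (ltr0n _ 2)) hi.
have ax : a <= x by apply: (supp_inf_lb smu).
have := sx (e / 2) (divr_gt0 e0 (ltr0n _ 2)).
rewrite (pfin _ _ (measurable_itv _)) lte_fin => h.
apply: (lt_le_trans h); apply: ple; try exact: measurable_itv.
move=> y /=; rewrite !in_itv /= => /andP[h1 h2].
rewrite -/a in xa; apply/andP; split; lra.
Qed.
Arguments supp_inf_pos {B mu}.




Lemma pos_cover mu (A : set R) (F : nat -> set R) : measurable A ->
  (forall n, measurable (F n)) -> A `<=` \bigcup_n F n ->
  0 < fine (mu A) -> exists n, 0 < fine (mu (F n)).
Proof.
move=> mA mF AF muA; apply: contrapT => hn.
have hF n : mu.-negligible (F n).
  exists (F n); split => //.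
  rewrite (pfin _ _ (mF n)); congr (_%:E).
  apply/eqP; rewrite eq_le pge0 andbT leNgt; apply/negP => h; apply: hn; by exists n.
have [N [mN muN sub]] := negligible_bigcup hF.
have : (mu A <= mu N)%E.
  apply: le_measure; rewrite ?inE //; exact: subset_trans sub.
rewrite muN (pfin _ _ mA) lee_fin; lra.
Qed.

Lemma Lint B mu c : strategy_on B mu -> 0 < fine (mu `]-oo, c]%classic) ->
  exists x, supp mu x /\ x <= c.
Proof.
move=> smu hc.
set T := [set t | 0 < fine (mu `]-oo, t]%classic)].
have lbT : forall t, T t -> 0 <= t.
  move=> t Tt; rewrite leNgt; apply/negP => t0; move: Tt; rewrite /T /=.
  rewrite (null_out smu); [by rewrite ltxx|exact: measurable_itv|].
  move=> y hy; have : y \in `]-oo, t] := hy; rewrite in_itv /= => yt.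
  by move=> /andP[y0 _]; lra.
have hi : has_inf T by split; [exists c|exists 0 => t /lbT].
set ts := inf T.
have tsc : ts <= c by apply: ge_inf => //; exists 0 => t /lbT.
exists ts; split => //.
move=> e e0.
have [t' Tt' t'lt] := @inf_adherent _ _ e e0 hi.
have h0 : fine (mu `]-oo, (ts - e)]%classic) = 0.
  apply/eqP; rewrite eq_le pge0 andbT leNgt; apply/negP => h.
  have : ts <= ts - e by apply: ge_inf => //; exists 0 => t /lbT.
  lra.
rewrite (pfin _ _ (measurable_itv _)) lte_fin.
have := psub mu _ _ _ (measurable_itv `]-oo, t']) (measurable_itv `]-oo, (ts - e)])
   (measurable_itv `](ts - e), (ts + e)[).
rewrite h0 add0r; move=> h; apply: (lt_le_trans Tt'); apply: h.
move=> y hy; have : y \in `]-oo, t'] := hy; rewrite in_itv /= => yt.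
have [yl|yl] := leP y (ts - e); [left|right].
  by have : y \in `]-oo, (ts - e)] by rewrite in_itv /= yl.
have : y \in `](ts - e), (ts + e)[ by rewrite in_itv /= yl /=; lra.
done.
Qed.


Lemma below_null B mu : strategy_on B mu -> supp_inf mu < supp_sup mu ->
  fine (mu `]-oo, (supp_inf mu)[%classic) = 0.
Proof.
move=> smu hlt; set a := supp_inf mu.
apply/eqP; rewrite eq_le pge0 andbT leNgt; apply/negP => h.
have cov : `]-oo, a[%classic `<=` \bigcup_n `]-oo, (a - n.+1%:R^-1)]%classic.
  move=> y hy; have : y \in `]-oo, a[ := hy; rewrite in_itv /= => ya.
  have [k hk] := ltr_add_invr ya; exists k => //.
  have : y \in `]-oo, (a - k.+1%:R^-1)] by rewrite in_itv /=; set r := k.+1%:R^-1 in hk *; lra.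
  done.
have [n hn] := pos_cover mu _ (fun n => `]-oo, (a - n.+1%:R^-1)]%classic)
  (measurable_itv _) (fun n => measurable_itv _) cov h.
have [x [sx xc]] := Lint _ _ _ smu hn.
have := supp_inf_lb smu sx; rewrite -/a.
have : 0 < n.+1%:R^-1 :> R by rewrite invr_gt0 ltr0n.
set r := n.+1%:R^-1 in xc *; lra.
Qed.

Lemma cont_below_open mu c d : 0 < fine (mu `]c, d[%classic) ->
  exists c', c < c' /\ 0 < fine (mu `]c', d[%classic).
Proof.
move=> h.
have cov : `]c, d[%classic `<=` \bigcup_n `](c + n.+1%:R^-1), d[%classic.
  move=> y hy; have : y \in `]c, d[ := hy; rewrite in_itv /= => /andP[cy yd].
  have [k hk] := ltr_add_invr cy; exists k => //.
  have : y \in `](c + k.+1%:R^-1), d[ by rewrite in_itv /= hk yd.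
  done.
have [n hn] := pos_cover mu _ (fun n => `](c + n.+1%:R^-1), d[%classic)
  (measurable_itv _) (fun n => measurable_itv _) cov h.
exists (c + n.+1%:R^-1); split => //.
by rewrite ltrDl invr_gt0 ltr0n.
Qed.

Lemma cont_above mu a eta : 0 < eta ->
  exists e, 0 < e /\ fine (mu `]a, (a + e)]%classic) < eta.
Proof.
move=> eta0.
pose F n := `]a, (a + n.+1%:R^-1)]%classic.
have mF n : measurable (F n) by exact: measurable_itv.
have capF : \bigcap_n F n = set0.
  apply/seteqP; split => // y hy.
  have : y \in `]a, (a + 1%:R^-1)] := hy 0%N I.
  rewrite in_itv /= => /andP[ay _].
  have [k hk] := ltr_add_invr ay.
  have : y \in `]a, (a + k.+1%:R^-1)] := hy k I.
  rewrite in_itv /= => /andP[_ yk]; set r := k.+1%:R^-1 in hk yk; lra.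
have cv := nonincreasing_cvg_mu (mu := mu) (F := F) _ mF _ _.
have := cv (le_lt_trans (probability_le1 _ (mF 0%N)) (ltry 1)).
rewrite capF measure0 => /(_ measurable0).
move=> /(_ _) cv2.
have nF : nonincreasing_seq F.
  move=> n m nm; apply/subsetPset => y hy.
  have : y \in `]a, (a + m.+1%:R^-1)] := hy.
  rewrite in_itv /= => /andP[ay ym].
  have : y \in `]a, (a + n.+1%:R^-1)]; last done.
  rewrite in_itv /= ay /=; apply: (le_trans ym); rewrite lerD2l.
  by rewrite lef_pV2 ?posrE ?ltr0n // ler_nat.
have /fine_cvgP [_ cv3] := cv2 nF.
have [N _ HN] := cvgr_lt _ cv3 _ eta0.
exists N.+1%:R^-1; split; first by rewrite invr_gt0 ltr0n.
exact: (HN N (leqnn N)).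
Qed.


Lemma Uf_le_H B v B' v' nu x : 0 < v -> Uf B v B' v' nu x <= v * Hf nu x - x.
Proof.
move=> v0; rewrite /Uf HGS lerD2r ler_pM2l // lerD2l.
rewrite -[leRHS]mul1r ler_wpM2r ?tv_le1 //; exact: pge0.
Qed.

Lemma Uf_ge_G B v B' v' nu x : 0 < v -> v * Gf nu x - x <= Uf B v B' v' nu x.
Proof.
move=> v0; rewrite /Uf lerD2r ler_pM2l // lerDl mulr_ge0 ?tv_ge0 //; exact: pge0.
Qed.

Lemma Uf0 B v B' v' nu : 0 < v -> 0 <= Uf B v B' v' nu 0.
Proof.
move=> v0; apply: le_trans (Uf_ge_G _ _ _ _ _ _ v0).
have := pge0 nu `]-oo, 0[%classic; rewrite -/(Gf nu 0) => g0.
by rewrite subr0 mulr_ge0 // ltW.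
Qed.

Lemma tv_sum B v B' v' x : tv B v B' v' x + tv B' v' B v x = 1.
Proof.
rewrite /tv.
have -> : mval B' v' B v = mval B v B' v'.
  by rewrite /mval (minC B') (minC v').
case: (x == mval B v B' v') => /=; last first.
  lra.
have [h|h|h] := ltgtP (Num.min B' v') (Num.min B v).
- by rewrite addr0.
- by rewrite add0r.
- lra.
Qed.

Lemma mainM (B1 v1 B2 v2 : R) (mu1 mu2 : probability R R) :
  0 <= B2 -> 0 < v1 -> 0 < v2 ->
  strategy_on B1 mu1 -> strategy_on B2 mu2 ->
  (forall mu', strategy_on B1 mu' ->
     (exp_util B1 v1 B2 v2 mu' mu2 <= exp_util B1 v1 B2 v2 mu1 mu2)%E) ->
  (forall mu', strategy_on B2 mu' ->
     (exp_util B2 v2 B1 v1 mu' mu1 <= exp_util B2 v2 B1 v1 mu2 mu1)%E) ->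
  supp_inf mu1 < supp_sup mu1 -> supp_inf mu1 = 0.
Proof.
move=> hB2 v10 v20 s1 s2 N1 N2 hlt.
set a := supp_inf mu1.
have [a0 aB1] := supp_inf_bnd s1 hlt; rewrite -/a in a0 aB1.
apply/eqP; rewrite eq_le a0 andbT leNgt; apply/negP => apos.
set U1 := Uf B1 v1 B2 v2 mu2.
set U2 := Uf B2 v2 B1 v1 mu1.
have D1 := devD _ _ _ _ _ _ v10 s1 N1.
have D2 := devD _ _ _ _ _ _ v20 s2 N2.
have F1 := below_null _ _ s1 hlt; rewrite -/a in F1.
have H1lt : forall y, y < a -> Hf mu1 y = 0.
  move=> y ya; apply/eqP; rewrite eq_le pge0 andbT -F1.
  apply: ple; try exact: measurable_itv.
  move=> z hz; have : z \in `]-oo, y] := hz; rewrite in_itv /= => zy.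
  have : z \in `]-oo, a[ by rewrite in_itv /=; lra.
  done.
have U2lt : forall y, y < a -> U2 y <= - y.
  move=> y ya; apply: le_trans (Uf_le_H _ _ _ _ _ _ v20) _.
  by rewrite H1lt // mulr0 add0r.
have U20 : 0 <= U2 0 by apply: Uf0.
have F2 : fine (mu2 `]0, a[%classic) = 0.
  apply/eqP; rewrite eq_le pge0 andbT leNgt; apply/negP => h.
  have [c [c0 hc]] := cont_below_open _ _ _ h.
  apply: (D2 0 _ `]c, a[%classic (measurable_itv _) _ c _ _).
  - by rewrite lexx hB2.
  - by rewrite (pfin _ _ (measurable_itv _)) lte_fin.
  - done.
  - move=> x hx; have : x \in `]c, a[ := hx; rewrite in_itv /= => /andP[cx xa].
    have := U2lt x xa; rewrite -/U2; lra.
set P := Gf mu2 a.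
set q := Sf mu2 a.
have HaPq : Hf mu2 a = P + q by apply: HGS.
have Gdel : forall d, 0 < d -> P <= Gf mu2 d.
  move=> d d0.
  have := psub mu2 _ _ _ (measurable_itv `]-oo, a[) (measurable_itv `]-oo, d[)
    (measurable_itv `]0, a[).
  rewrite F2 addr0; apply.
  move=> z hz; have : z \in `]-oo, a[ := hz; rewrite in_itv /= => za.
  have [zd|zd] := ltP z d; [left|right].
    by have : z \in `]-oo, d[ by rewrite in_itv /=.
  by have : z \in `]0, a[ by rewrite in_itv /= za andbT; lra.
have U1del : v1 * P - a / 4 <= U1 (a / 4).
  apply: le_trans (Uf_ge_G _ _ _ _ _ _ v10); rewrite lerD2r ler_pM2l //.
  apply: Gdel; lra.
have q0 : 0 <= q by apply: pge0.
have [qz|qpos] : q = 0 \/ 0 < q.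
  by move: q0; rewrite le_eqVlt => /orP[/eqP <-|->]; [left|right].
-
  set eta := a / (4 * v1).
  have eta0 : 0 < eta by apply: divr_gt0 => //; rewrite mulr_gt0.
  have [e0 [e0pos he0]] := cont_above mu2 a eta eta0.
  set et := fine (mu2 `]a, (a + e0)]%classic) in he0.
  have et0 : 0 <= et by apply: pge0.
  have vet : v1 * et <= a / 4.
    have -> : a / 4 = v1 * eta by rewrite /eta; field; rewrite lt0r_neq0.
    by rewrite ler_pM2l // ltW.
  set e := Num.min e0 (a / 4).
  have epos : 0 < e by rewrite lt_min e0pos /=; lra.
  have ee0 : e <= e0 by rewrite ge_min lexx.
  have ea : e <= a / 4 by rewrite ge_min lexx orbT.
  have Hb : forall x, x < a + e -> Hf mu2 x <= P + et.
    move=> x xae.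
    have := psub mu2 _ _ _ (measurable_itv `]-oo, x]) (measurable_itv `]-oo, a])
      (measurable_itv `]a, (a + e0)]).
    rewrite -/(Hf mu2 x) -/(Hf mu2 a) HaPq qz addr0; apply.
    move=> z hz; have : z \in `]-oo, x] := hz; rewrite in_itv /= => zx.
    have [za|za] := leP z a; [left|right].
      by have : z \in `]-oo, a] by rewrite in_itv /=.
    by have : z \in `]a, (a + e0)] by rewrite in_itv /= za /=; lra.
  apply: (D1 (a / 4) _ `](a - e), (a + e)[%classic (measurable_itv _) _ (a / 4) _ _).
  - apply/andP; split; lra.
  - rewrite (pfin _ _ (measurable_itv _)) lte_fin.
    exact: (supp_inf_pos s1 hlt e epos).
  - lra.
  - move=> x hx; have : x \in `](a - e), (a + e)[ := hx.
    rewrite in_itv /= => /andP[xl xr].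
    have h1 := Uf_le_H B1 v1 B2 v2 mu2 x v10.
    have h2 : v1 * Hf mu2 x <= v1 * P + v1 * et.
      by rewrite -mulrDr ler_pM2l // Hb.
    rewrite -/U1 in h1 *. have h3 : U1 x <= v1 * P - a / 2 by lra. lra.
-
  set r := Sf mu1 a.
  set t := tv B1 v1 B2 v2 a.
  set t' := tv B2 v2 B1 v1 a.
  have tt : t + t' = 1 by apply: tv_sum.
  have t'0 : 0 <= t' by apply: tv_ge0.
  have r0 : 0 <= r by apply: pge0.
  have U2a : U2 a = v2 * (t' * r) - a.
    by rewrite /U2 /Uf /Gf F1 add0r.
  have mqa : (0 < mu2 [set a])%E by rewrite (pfin _ _ (measurable_set1 _)) lte_fin.
  have [z|nz] := eqVneq (t' * r) 0.
  + apply: (D2 0 _ [set a] (measurable_set1 _) mqa a apos).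
    * by rewrite lexx hB2.
    * move=> x /= ->; rewrite -/U2 U2a z mulr0; lra.
  + have t'pos : 0 < t'.
      rewrite lt0r t'0 andbT; apply/eqP => h; by rewrite h mul0r eqxx in nz.
    have rpos : 0 < r.
      rewrite lt0r r0 andbT; apply/eqP => h; by rewrite h mulr0 eqxx in nz.
    set K := v1 * q - v1 * (t * q).
    have Kpos : 0 < K.
      have -> : K = v1 * (t' * q).
        have -> : t' = 1 - t by lra.
        rewrite /K; ring.
      by rewrite mulr_gt0 // mulr_gt0.
    set d := Num.min (K / 2) (B1 - a).
    have dpos : 0 < d by rewrite lt_min; apply/andP; split; lra.
    have dK : d <= K / 2 by rewrite ge_min lexx.
    have dB : d <= B1 - a by rewrite ge_min lexx orbT.
    have mra : (0 < mu1 [set a])%E by rewrite (pfin _ _ (measurable_set1 _)) lte_fin.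
    apply: (D1 (a + d) _ [set a] (measurable_set1 _) mra (K / 2) _ _).
    * apply/andP; split; lra.
    * lra.
    * move=> x /= ->.
      have U1a : U1 a = v1 * P + v1 * (t * q) - a.
        by rewrite /U1 /Uf -/(Gf mu2 a) -/P -/t -/(Sf mu2 a) -/q mulrDr.
      have U1b : v1 * P + v1 * q - (a + d) <= U1 (a + d).
        apply: le_trans (Uf_ge_G _ _ _ _ _ _ v10); rewrite lerD2r -mulrDr ler_pM2l //.
        rewrite -HaPq; apply: ple; try exact: measurable_itv.
        move=> z hz; have : z \in `]-oo, a] := hz; rewrite in_itv /= => za.
        by have : z \in `]-oo, (a + d)[ by rewrite in_itv /=; lra.
      rewrite -/U1 U1a /K in dK U1b *; lra.
Qed.

End S.

Theorem lemma4 (R : realType) (B1 B2 v1 v2 : R)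
  (hB1 : 0 <= B1) (hB2 : 0 <= B2) (hv1 : 0 < v1) (hv2 : 0 < v2)
  (mu1 mu2 : probability R R) :
  nash_eq B1 v1 B2 v2 mu1 mu2 ->
  supp_inf mu1 < supp_sup mu1 ->
  supp_inf mu2 < supp_sup mu2 ->
  supp_inf mu1 = 0 /\ supp_inf mu2 = 0.
Proof.
move=> [s1 s2 N1 N2] h1 h2; split.
- exact: (@mainM R B1 v1 B2 v2 mu1 mu2 hB2 hv1 hv2 s1 s2 N1 N2 h1).
- exact: (@mainM R B2 v2 B1 v1 mu2 mu1 hB1 hv2 hv1 s2 s1 N2 N1 h2).
Qed.
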